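(* Let $s\ge 1$ and let $i,j$ be integers with $0\le i\le s$, $s\le j\le 2s$ and $(i,j)\ne(s,s)$. Then $$(-1)^{s+i+j}\binom{2s}{j}\sum_{i'=0}^{s}(-1)^{i'}\binom{j-i'-1}{s}\binom{s}{i-i'}+(-1)^{i+j+1}(2s-i)\binom{2s}{i}\sum_{j'=0}^{s}\sum_{t=0}^{i}\frac{(-1)^{t+j'}}{2s-t}\binom{i}{t}\binom{s-t-1+j'}{j'}\binom{s}{j-j'}=0.$$
   Context: For an integer $b\ge 0$ and any integer $a$, $\binom{a}{b}=a(a-1)\cdots(a-b+1)/b!$, and $\binom{a}{b}=0$ for $b<0$. *)

(* Defs.v *)
From mathcomp Require Import all_boot all_order all_algebra.
Set Implicit Arguments. Unset Strict Implicit. Unset Printing Implicit Defensive.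
Import Order.TTheory GRing.Theory Num.Theory.
Local Open Scope ring_scope.

Definition gbinom (a b : int) : rat :=
  if b < 0 then 0
  else (\prod_(k < `|b|%N) (a%:~R - (k%:R : rat))) / ((`|b|%N)`!)%:R.

(* Main.v *)
Require Import Defs.
From mathcomp Require Import all_boot all_order all_algebra.
From mathcomp Require Import zify ring lra.
Import Order.TTheory GRing.Theory Num.Theory.
Local Open Scope ring_scope.

Notation G := gbinom.

Lemma gbP (x : int) (k : nat) :
  G x k = (\prod_(l < k) (x%:~R - (l%:R : rat))) / (k`!)%:R.
Proof. by rewrite /gbinom. Qed.

Lemma gbN (x y : int) : y < 0 -> G x y = 0.
Proof. by rewrite /gbinom => ->. Qed.

Lemma gb0 (x : int) : G x 0 = 1.
Proof. by rewrite gbP big_ord0 fact0 divr1. Qed.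

Lemma fact_neq0 k : (k`!)%:R != (0 : rat).
Proof. by rewrite pnatr_eq0 -lt0n fact_gt0. Qed.

Lemma gbS (x : int) (k : nat) :
  G x k.+1 * (k.+1)%:R = G x k * (x%:~R - k%:R).
Proof.
rewrite !gbP big_ord_recr /= factS natrM.
have := fact_neq0 k; have : (k.+1)%:R != (0:rat) by rewrite pnatr_eq0.
move=> h1 h2; field. by rewrite h2 nat1r h1.
Qed.

Lemma gbPk (x : int) (k : nat) :
  G (x + 1) k.+1 = G x k.+1 + G x k.
Proof.
rewrite !gbP big_ord_recl big_ord_recr /= factS natrM.
have -> : \prod_(i < k) ((x + 1)%:~R - (bump 0 i)%:R) = \prod_(i < k) (x%:~R - (i%:R : rat)).
  by apply: eq_bigr => i _; rewrite /bump /= add1n intrD -natr1; ring.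
have := fact_neq0 k; have : (k.+1)%:R != (0:rat) by rewrite pnatr_eq0.
move=> h1 h2; rewrite intrD -natr1. field. by rewrite h2 natr1 h1.
Qed.

Lemma gbPascal (x y : int) : G (x + 1) y = G x y + G x (y - 1).
Proof.
case: y => [[|k]|k].
- by rewrite !gb0 gbN ?addr0.
- have -> : Posz k.+1 - 1 = Posz k by lia.
  exact: gbPk.
- by rewrite !gbN ?addr0 //; lia.
Qed.

Lemma gbnat (n k : nat) : G n k = ('C(n, k))%:R.
Proof.
elim: n k => [|n IH] [|k].
- by rewrite gb0.
- rewrite gbP big_ord_recl /= subr0 mul0r mul0r bin0n; done.
- by rewrite gb0 bin0.
- have -> : Posz n.+1 = Posz n + 1 by lia.
  by rewrite gbPk !IH binS natrD.
Qed.

Lemma gbnat_small (n k : nat) : (n < k)%N -> G n k = 0.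
Proof. by move=> h; rewrite gbnat bin_small. Qed.

Lemma sign_sq (n : nat) : (-1) ^+ n * (-1) ^+ n = (1 : rat).
Proof. by rewrite -exprD addnn -mul2n exprM expr2 mulN1r opprK expr1n. Qed.

Lemma gbupneg (x : int) (k : nat) :
  G x k = (-1) ^+ k * G (k%:Z - x - 1) k.
Proof.
rewrite !gbP mulrA; congr (_ / _).
rewrite [in RHS](reindex_inj rev_ord_inj) /=.
have -> : \prod_(j < k) ((k%:Z - x - 1)%:~R - ((k - j.+1)%N)%:R) = \prod_(j<k) - (x%:~R - ((j:nat)%:R : rat)).
  apply: eq_bigr => l _; rewrite natrB; last by case: l.
  rewrite !intrD intrN /= -!natr1; ring.
by rewrite prodrN card_ord mulrA sign_sq mul1r.
Qed.

Lemma gb0l (y : int) : G 0 y = (y == 0)%:R.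
Proof.
case: y => [[|k]|k].
- by rewrite gb0.
- by rewrite gbnat.
- by rewrite gbN.
Qed.

Lemma sum_delta (N q : nat) (F : nat -> rat) :
  \sum_(l < N) G 0 (l%:Z - q%:Z) * F l = (q < N)%N%:R * F q.
Proof.
elim: N => [|N IH]; first by rewrite big_ord0 ltn0 mul0r.
rewrite big_ord_recr /= IH gb0l.
case: (ltngtP q N) => h.
- have -> : (N%:Z - q%:Z == 0) = false by apply/negbTE; lia.
  rewrite (_ : (q < N.+1)%N = true); last by lia.
  rewrite /=; ring.
- have -> : (N%:Z - q%:Z == 0) = false by apply/negbTE; lia.
  rewrite (_ : (q < N.+1)%N = false); last by lia.
  rewrite /=; ring.
- subst; rewrite subrr eqxx ltnSn /=; ring.
Qed.

Lemma vdm (p : nat) : forall (r : nat) (x k : int) (N : nat), (p + r < N)%N ->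
  \sum_(l < N) G p (l%:Z - r%:Z) * G x (k - l%:Z) = G (p%:Z + x) (k - r%:Z).
Proof.
elim: p => [|p IH] r x k N h.
- rewrite (sum_delta N r (fun l => G x (k - l%:Z))) add0r.
  by rewrite (_ : (r < N)%N = true) ?mul1r //; lia.
- have -> : Posz p.+1 = Posz p + 1 by lia.
  under eq_bigr do rewrite gbPascal mulrDl.
  rewrite big_split /= IH; last by lia.
  have e : forall l : nat, l%:Z - r%:Z - 1 = l%:Z - (r.+1)%:Z by move=> l; lia.
  under eq_bigr do rewrite e.
  rewrite IH; last by lia.
  rewrite (_ : p%:Z + 1 + x = (p%:Z + x) + 1); last by ring.
  rewrite gbPascal; congr (_ + G _ _); lia.
Qed.

Lemma Gc (x y u v : int) : x = y -> u = v -> G x u = G y v.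
Proof. by move=> -> ->. Qed.

Lemma altvdm (a : nat) : forall (q : nat) (d k : int) (N : nat), k < N%:Z ->
  \sum_(r < N) (-1) ^+ r * G a (r%:Z - q%:Z) * G (d - r%:Z) (k - r%:Z)
  = (-1) ^+ q * G (d - q%:Z - a%:Z) (k - q%:Z).
Proof.
elim: a => [|a IH] q d k N h.
- under eq_bigr do rewrite -mulrA mulrCA.
  rewrite (sum_delta N q (fun r => (-1) ^+ r * G (d - r%:Z) (k - r%:Z))) subr0.
  case: (ltnP q N) => hq; first by rewrite mul1r.
  by rewrite mul0r gbN ?mulr0 //; lia.
- have -> : Posz a.+1 = Posz a + 1 by lia.
  under eq_bigr do rewrite gbPascal mulrDr mulrDl.
  rewrite big_split /= IH //.
  have e : forall r : nat, r%:Z - q%:Z - 1 = r%:Z - (q.+1)%:Z by move=> r; lia.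
  under eq_bigr do rewrite e.
  rewrite IH //.
  rewrite (Gc (d - q%:Z - a%:Z) ((d - q%:Z - (a%:Z + 1)) + 1) (k - q%:Z) (k - q%:Z)); [|ring|done].
  rewrite gbPascal exprS.
  rewrite (Gc (d - (q.+1)%:Z - a%:Z) (d - q%:Z - (a%:Z + 1)) (k - (q.+1)%:Z) (k - q%:Z - 1)); [|lia|lia].
  ring.
Qed.

Lemma altsum (s : nat) (j : int) :
  \sum_(r < s.+1) (-1) ^+ r * G j r = (-1) ^+ s * G (j - 1) s.
Proof.
elim: s => [|s IH]; first by rewrite big_ord_recl big_ord0 !gb0 addr0.
rewrite big_ord_recr /= IH.
rewrite (Gc j ((j - 1) + 1) s.+1 s.+1); [|ring|done].
rewrite gbPk exprS; ring.
Qed.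

Definition Pf (s i : nat) (j : int) :=
  \sum_(r < s.+1) (-1) ^+ r * G (r%:Z - 1) i * G j r.
Definition Qf (s i : nat) (j : int) :=
  \sum_(k < s.+1) (-1) ^+ k * G (j - k%:Z - 1) s * G s (i%:Z - k%:Z).

Lemma Prec (s i : nat) (j : int) :
  Pf s i.+1 j + Pf s i (j - 1) = (-1) ^+ s * G (j - 1) s * G s i.+1.
Proof.
rewrite /Pf.
have ej : forall r : nat, G j r = G (j - 1) r + G (j - 1) (r%:Z - 1).
  by move=> r; rewrite -gbPascal; apply: Gc; ring.
under eq_bigr do rewrite ej mulrDr.
rewrite big_split /=.
set T := (fun r : nat => (-1) ^+ r * G r i.+1 * G (j - 1) r : rat).
have H1 : \sum_(r < s.+1) (-1) ^+ r * G (r%:Z - 1) i.+1 * G (j - 1) r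
        + \sum_(r < s.+1) (-1) ^+ r * G (r%:Z - 1) i * G (j - 1) r
        = \sum_(r < s.+1) T r.
  rewrite -big_split; apply: eq_bigr => r _; rewrite /T.
  rewrite (Gc r ((r%:Z - 1) + 1) i.+1 i.+1); [|ring|done].
  rewrite gbPk; by rewrite mulrDr mulrDl.
have H2 : \sum_(r < s.+1) (-1) ^+ r * G (r%:Z - 1) i.+1 * G (j - 1) (r%:Z - 1)
        = - \sum_(r < s) T r.
  rewrite big_ord_recl /= (@gbN (j - 1) (0%:Z - 1)) // mulr0 add0r.
  rewrite -sumrN; apply: eq_bigr => r _; rewrite /T /bump /= add1n.
  rewrite (_ : (r.+1)%:Z - 1 = r); last by lia.
  rewrite exprS; set e := (-1) ^+ _; ring.
have H3 : \sum_(r < s.+1) T r = \sum_(r < s) T r + T s by rewrite big_ord_recr.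
rewrite -addrA [X in _ + X]addrC addrA H1 H2 H3.
by rewrite addrAC subrr add0r /T mulrAC.
Qed.

Lemma Qrec (s i : nat) (j : int) : (i < s)%N ->
  Qf s i.+1 j = G (j - 1) s * G s i.+1 - Qf s i (j - 1).
Proof.
move=> his; rewrite /Qf big_ord_recl big_ord_recr /=.
rewrite (@gbN s (i%:Z - s%:Z)); last by lia.
rewrite mulr0 addr0 expr0 mul1r.
rewrite addr0.
rewrite [_ + 0]addr0 -sumrN; congr (_ + _); apply: eq_bigr => k _.
rewrite /bump /= add1n exprS.
rewrite (Gc (j - k.+1%:Z - 1) (j - 1 - k%:Z - 1) s s); [|lia|done].
rewrite (Gc s s (i.+1%:Z - k.+1%:Z) (i%:Z - k%:Z)); [|done|lia].
by rewrite mulN1r !mulNr.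
Qed.

Lemma QP (s i : nat) : (i <= s)%N -> forall j : int, Qf s i j = (-1) ^+ s * Pf s i j.
Proof.
elim: i => [|i IH] his j.
- rewrite /Qf /Pf big_ord_recl big1 /=; last first.
    move=> k _; rewrite (@gbN s (0%:Z - (bump 0 k)%:Z)) ?mulr0 //; lia.
  under [in RHS]eq_bigr do rewrite gb0 mulr1.
  rewrite altsum mulrA sign_sq mul1r addr0 mul1r !subr0 gb0 mulr1.
  done.
- rewrite Qrec // IH; last by lia.
  have Hx : (-1) ^+ s * (Pf s i.+1 j + Pf s i (j - 1)) = G (j - 1) s * G s i.+1.
    by rewrite Prec !mulrA sign_sq mul1r.
  rewrite -Hx; ring.
Qed.

Lemma termT (a i r : nat) (Z : rat) : (i.+1 < a.+1)%N ->
  (-1) ^+ r * G (r%:Z - 1) i * G a.+1 r / ((a.+1%:R - i%:R) * G a.+1 i) * Z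
  - (-1) ^+ r * G (r%:Z - 1) i * G a r / ((a%:R - i%:R) * G a i) * Z
  = (-1) ^+ r * G (r%:Z - 1) i.+1 * G a.+1 r / ((a.+1%:R - i.+1%:R) * G a.+1 i.+1) * Z.
Proof.
move=> hi.
set e := (-1) ^+ r.
have nzi : (i.+1)%:R != (0 : rat) by rewrite pnatr_eq0.
have nza : (a.+1)%:R != (0 : rat) by rewrite pnatr_eq0.
have relu : G (r%:Z - 1) i.+1 * (i.+1)%:R = G (r%:Z - 1) i * (r%:R - 1 - i%:R).
  by rewrite gbS intrD.
have relg1 : G a.+1 i.+1 * (i.+1)%:R = (a.+1%:R - i%:R) * G a.+1 i.
  by rewrite !gbnat -natrM mulnC mul_bin_left natrM natrB //; lia.
have relg2 : G a i * (a.+1)%:R = (a.+1%:R - i%:R) * G a.+1 i.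
  by rewrite !gbnat -natrM mulnC -[a in 'C(a, i)]/(a.+1.-1) mul_bin_down natrM natrB //; lia.
have relh : G a r * (a.+1)%:R = (a.+1%:R - r%:R) * G a.+1 r.
  case: (leqP r a.+1) => hr.
    by rewrite !gbnat -natrM mulnC -[a in 'C(a, r)]/(a.+1.-1) mul_bin_down natrM natrB.
  by rewrite !gbnat_small ?mul0r ?mulr0 //; lia.
have g0nz : G a.+1 i != 0.
  by rewrite gbnat pnatr_eq0 -lt0n bin_gt0; lia.
have eu1 : G (r%:Z - 1) i.+1 = G (r%:Z - 1) i * (r%:R - 1 - i%:R) / (i.+1)%:R.
  by rewrite -relu mulfK.
have eg1 : G a.+1 i.+1 = (a.+1%:R - i%:R) * G a.+1 i / (i.+1)%:R.
  by rewrite -relg1 mulfK.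
have eg2 : G a i = (a.+1%:R - i%:R) * G a.+1 i / (a.+1)%:R.
  by rewrite -relg2 mulfK.
have eh : G a r = (a.+1%:R - r%:R) * G a.+1 r / (a.+1)%:R.
  by rewrite -relh mulfK.
rewrite eu1 eg1 eg2 eh.
have n1 : (a.+1%:R - i%:R) != (0 : rat).
  by rewrite subr_eq0 eqr_nat; lia.
have n2 : (a%:R - i%:R) != (0 : rat).
  by rewrite subr_eq0 eqr_nat; lia.
have n3 : (a.+1%:R - i.+1%:R) != (0 : rat).
  by rewrite subr_eq0 eqr_nat; lia.
rewrite -!natr1 in nzi nza n1 n3 *.
field.
by rewrite nzi g0nz n1 n3 nza.
Qed.

Lemma Mstar (i : nat) : forall (a : nat) (c k : int) (N : nat), (i < a)%N -> k < N%:Z ->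
  \sum_(t < i.+1) (-1) ^+ t / (a%:R - t%:R) * G i t * G (t%:Z - c) k
  = \sum_(r < N) (-1) ^+ r * G (r%:Z - 1) i * G a r / ((a%:R - i%:R) * G a i)
      * G (a%:Z - c - r%:Z) (k - r%:Z).
Proof.
elim: i => [|i IH] a c k N hi hk.
- rewrite big_ord_recl big_ord0 addr0 /=.
  have Hv := altvdm a 0 (a%:Z - c) k N hk.
  rewrite expr0 mul1r in Hv.
  have nza : a%:R != (0 : rat) by rewrite pnatr_eq0 -lt0n.
  rewrite (eq_bigr (fun r : 'I_N => ((-1) ^+ r * G a (r%:Z - 0%:Z) * G (a%:Z - c - r%:Z) (k - r%:Z)) / a%:R)); last first.
    move=> [r hr] _ /=; rewrite !gb0 subr0 mulr1 (Gc a a (r%:Z - 0%:Z) r) //; last by rewrite subr0.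
    by field.
  rewrite -mulr_suml Hv gb0 mulr1 subr0.
  rewrite (Gc (a%:Z - c - 0%:Z - a%:Z) (0%:Z - c) (k - 0%:Z) k); [|ring|ring].
  by field.
- case: a hi => [|a] hi //.
  have ei : forall t : nat, G i.+1 t = G i t + G i (t%:Z - 1).
    move=> t; rewrite -gbPascal; apply: Gc => //; lia.
  under eq_bigr do rewrite ei mulrDr mulrDl.
  rewrite big_split /= big_ord_recr /= (@gbnat_small i i.+1) // mulr0 mul0r addr0.
  rewrite (IH a.+1 c k N); [|lia|lia].
  rewrite big_ord_recl /= (@gbN i (0%:Z - 1)) // mulr0 mul0r add0r.
  have -> : \sum_(t < i.+1) (-1) ^+ bump 0 t / (a.+1%:R - (bump 0 t)%:R) * G i ((bump 0 t)%:Z - 1)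
              * G ((bump 0 t)%:Z - c) k
          = - \sum_(t < i.+1) (-1) ^+ t / (a%:R - t%:R) * G i t * G (t%:Z - (c - 1)) k.
    rewrite -sumrN; apply: eq_bigr => [[t ht]] _ /=.
    rewrite /bump /= add1n exprS -!natr1.
    rewrite (Gc i i ((t.+1)%:Z - 1) t) //; last by lia.
    rewrite (Gc ((t.+1)%:Z - c) (t%:Z - (c - 1)) k k) //; last by lia.
    rewrite (_ : a%:R + 1 - (t%:R + 1) = (a%:R - t%:R : rat)); last by ring.
    set e := (-1) ^+ t; ring.
  rewrite (IH a (c - 1) k N); [|lia|lia].
  rewrite -sumrB; apply: eq_bigr => [[r hr]] _ /=.
  rewrite (Gc (a%:Z - (c - 1) - r%:Z) (a.+1%:Z - c - r%:Z) (k - r%:Z) (k - r%:Z)) //; last by lia.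
  by rewrite termT.
Qed.

Lemma trinom (n j r : nat) : (r <= j)%N -> (j <= n)%N ->
  ('C(n, r) * 'C(n - r, j - r) = 'C(n, j) * 'C(j, r))%N.
Proof.
move=> hrj hjn.
have h1 := @bin_fact n r (leq_trans hrj hjn).
have h2 := @bin_fact (n - r) (j - r) (leq_sub2r r hjn).
have e : (n - r - (j - r) = n - j)%N by lia.
rewrite e in h2.
have h3 := @bin_fact n j hjn.
have h4 := @bin_fact j r hrj.
apply/eqP; rewrite -(eqn_pmul2r (_ : 0 < r`! * (j - r)`! * (n - j)`!)%N); last first.
  by rewrite !muln_gt0 !fact_gt0.
apply/eqP.
have E1 : ('C(n, r) * 'C(n - r, j - r) * (r`! * (j - r)`! * (n - j)`!)
   = 'C(n, r) * (r`! * ('C(n - r, j - r) * ((j - r)`! * (n - j)`!))))%N by ring.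
have E2 : ('C(n, j) * 'C(j, r) * (r`! * (j - r)`! * (n - j)`!)
   = 'C(n, j) * (('C(j, r) * (r`! * (j - r)`!)) * (n - j)`!))%N by ring.
rewrite E1 E2 h2 h4 h1 -h3; ring.
Qed.

Lemma inner (s r j : nat) : (r <= s)%N -> (s <= j)%N -> (j <= 2 * s)%N ->
  G (2 * s)%N r * \sum_(j' < s.+1) G s (j%:Z - j'%:Z) * G ((2 * s)%N%:Z - s%:Z - r%:Z) (j'%:Z - r%:Z)
  = G (2 * s)%N j * G j r.
Proof.
move=> hrs hsj hj2.
have e : (2 * s)%N%:Z - s%:Z - r%:Z = (s - r)%N by lia.
under eq_bigr do rewrite e mulrC.
rewrite vdm; last by lia.
rewrite (Gc ((s - r)%N%:Z + s) (2 * s - r)%N (j%:Z - r%:Z) (j - r)%N); [|lia|lia].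
rewrite !gbnat -!natrM trinom //; lia.
Qed.

Theorem proposition8 (s i j : nat) :
  (1 <= s)%N -> (i <= s)%N -> (s <= j)%N -> (j <= 2 * s)%N -> (i, j) != (s, s) ->
  (-1 : rat) ^+ (s + i + j) * gbinom (2 * s)%:Z j%:Z *
    (\sum_(0 <= i' < s.+1)
        (-1) ^+ i' * gbinom (j%:Z - i'%:Z - 1) s%:Z * gbinom s%:Z (i%:Z - i'%:Z))
  + (-1 : rat) ^+ (i + j + 1) * ((2 * s)%:R - i%:R) * gbinom (2 * s)%:Z i%:Z *
    (\sum_(0 <= j' < s.+1) \sum_(0 <= t < i.+1)
        (-1) ^+ (t + j') / ((2 * s)%:R - t%:R) * gbinom i%:Z t%:Z
          * gbinom (s%:Z - t%:Z - 1 + j'%:Z) j'%:Z * gbinom s%:Z (j%:Z - j'%:Z))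
  = 0.
Proof.
move=> hs1 his hsj hj2 _.
rewrite big_mkord.
have -> : \sum_(i' < s.+1) (-1) ^+ i' * gbinom (j%:Z - i'%:Z - 1) s%:Z * gbinom s%:Z (i%:Z - i'%:Z)
  = Qf s i j by [].
rewrite QP //.
set DS := \sum_(0 <= j' < s.+1) _.
have D : DS = \sum_(jp < s.+1) G s (j%:Z - jp%:Z) *
   \sum_(t < i.+1) (-1) ^+ t / ((2 * s)%:R - t%:R) * G i t * G (t%:Z - s%:Z) jp.
  rewrite /DS big_mkord; apply: eq_bigr => [[jp hjp]] _ /=.
  rewrite big_mkord mulr_sumr; apply: eq_bigr => [[t ht]] _ /=.
  rewrite (gbupneg (t%:Z - s%:Z) jp).
  rewrite (Gc (jp%:Z - (t%:Z - s%:Z) - 1) (s%:Z - t%:Z - 1 + jp%:Z) jp jp); [|ring|done].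
  rewrite exprD; ring.
set K := ((2 * s)%:R - i%:R) * G (2 * s)%N i.
have Knz : K != 0.
  rewrite /K mulf_neq0 //.
    by rewrite subr_eq0 eqr_nat; lia.
  by rewrite gbnat pnatr_eq0 -lt0n bin_gt0; lia.
have KEY : K * DS = G (2 * s)%N j * Pf s i j.
  rewrite D.
  transitivity (K * \sum_(jp < s.+1) G s (j%:Z - jp%:Z) *
     \sum_(r < s.+1) (-1) ^+ r * G (r%:Z - 1) i * G (2 * s)%N r / K
      * G ((2 * s)%N%:Z - s%:Z - r%:Z) (jp%:Z - r%:Z)).
    congr (_ * _); apply: eq_bigr => [[jp hjp]] _ /=.
    by rewrite (Mstar i (2 * s) s jp s.+1) //; lia.
  rewrite mulr_sumr.
  transitivity (\sum_(jp < s.+1) \sum_(r < s.+1) (-1) ^+ r * G (r%:Z - 1) i *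
     (G (2 * s)%N r * (G s (j%:Z - jp%:Z) * G ((2 * s)%N%:Z - s%:Z - r%:Z) (jp%:Z - r%:Z)))).
    apply: eq_bigr => [[jp hjp]] _ /=; rewrite !mulr_sumr; apply: eq_bigr => [[r hr]] _ /=.
    by field.
  rewrite exchange_big /= /Pf mulr_sumr; apply: eq_bigr => [[r hr]] _ /=.
  rewrite -mulr_sumr -mulr_sumr inner; [|lia|lia|lia].
  set e := (-1) ^+ r; ring.
have KEY' : (-1) ^+ (i + j + 1) * ((2 * s)%:R - i%:R) * G (2 * s)%N i * DS
   = (-1) ^+ (i + j + 1) * (G (2 * s)%N j * Pf s i j).
  by rewrite -KEY /K; ring.
rewrite KEY' !exprD expr1.
set ps := (-1) ^+ s; set pi := (-1) ^+ i; set pj := (-1) ^+ j.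
have -> : ps * pi * pj * G (2 * s)%N j * (ps * Pf s i j) = pi * pj * G (2 * s)%N j * Pf s i j * (ps * ps) by ring.
rewrite /ps sign_sq; ring.
Qed.
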